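(* Let $M$ be a $3$-connected matroid with $r(M)\ge 4$, and let $C^*$ and $D^*$ be distinct cocircuits of $M$. Then $r_M(C^*\cup D^* )\ge 4$. *)

(* Defs.v *)
From mathcomp Require Import all_boot.
Set Implicit Arguments. Unset Strict Implicit. Unset Printing Implicit Defensive.

(* A matroid whose ground set is the whole finite type E, given by its
   independent sets (Oxley's axioms (I1)-(I3)). *)
Record matroid (E : finType) := Matroid {
  indep : {set E} -> bool;
  indep0 : indep set0;
  indep_sub : forall A B : {set E}, B \subset A -> indep A -> indep B;
  indep_aug : forall A B : {set E}, indep A -> indep B -> #|A| < #|B| ->
                exists2 x, x \in B :\: A & indep (x |: A)
}.

Section MatroidDefs.
Variables (E : finType) (M : matroid E).

Definition rk (X : {set E}) : nat :=
  \max_(Y : {set E} | (Y \subset X) && indep M Y) #|Y|.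

Definition rank_matroid : nat := rk setT.

Definition is_basis (B : {set E}) : Prop :=
  indep M B /\ forall Y : {set E}, indep M Y -> B \subset Y -> Y = B.

(* C is dependent in the dual matroid M^* iff it is not contained in the
   complement of any basis, i.e. it meets every basis. *)
Definition meets_all_bases (C : {set E}) : Prop :=
  forall B, is_basis B -> ~~ [disjoint B & C].

(* cocircuit = circuit of M^* = minimal dependent set of M^* *)
Definition cocircuit (C : {set E}) : Prop :=
  meets_all_bases C /\ forall D : {set E}, D \proper C -> ~ meets_all_bases D.

(* Tutte connectivity: a k-separation is a partition (X, E - X) with
   |X|, |E - X| >= k and r(X) + r(E - X) - r(M) < k. *)
Definition k_separation (k : nat) (X : {set E}) : Prop :=
  k <= #|X| /\ k <= #|~: X| /\ rk X + rk (~: X) < rank_matroid + k.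

Definition n_connected (n : nat) : Prop :=
  forall k, 1 <= k -> k < n -> forall X : {set E}, ~ k_separation k X.

Definition three_connected : Prop := n_connected 3.

End MatroidDefs.

(* Main.v *)
From Stdlib Require Import Classical.
Require Import Defs.
From mathcomp Require Import all_boot.
From mathcomp Require Import zify.
Set Implicit Arguments. Unset Strict Implicit.

Section Aux.
Variables (E : finType) (M : matroid E).

Lemma rk_ub (X I : {set E}) : I \subset X -> indep M I -> #|I| <= rk M X.
Proof. by move=> sI iI; rewrite /rk; apply: (leq_bigmax_cond I); rewrite sI iI. Qed.

Lemma rk_le (X : {set E}) n : (forall I : {set E}, I \subset X -> indep M I -> #|I| <= n) -> rk M X <= n.
Proof. by move=> H; apply/bigmax_leqP => I /andP[sI iI]; apply: H. Qed.

Lemma rk_card (X : {set E}) : rk M X <= #|X|.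
Proof. by apply: rk_le => I sI _; exact: (subset_leq_card sI). Qed.

Lemma rk_attain (X : {set E}) : exists2 I : {set E}, (I \subset X) && indep M I & rk M X = #|I|.
Proof.
have h : 0 < #|[pred Y : {set E} | (Y \subset X) && indep M Y]|.
  by apply/card_gt0P; exists set0; rewrite inE sub0set indep0.
have [I0 hI0 e] := eq_bigmax_cond (fun Y : {set E} => #|Y|) h.
by exists I0; [move: hI0; rewrite inE | rewrite /rk e].
Qed.

Lemma basis_card (B : {set E}) : is_basis M B -> #|B| = rank_matroid M.
Proof.
move=> [iB mB]; rewrite /rank_matroid; apply/eqP; rewrite eqn_leq rk_ub ?subsetT //=.
have [A /andP[_ iA] eA] := rk_attain setT; rewrite eA.
rewrite leqNgt; apply/negP => lt.
have [x /setDP[_ xB] ix] := indep_aug iB iA lt.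
have := mB _ ix (subsetUr _ _) => e.
by move: xB; rewrite -e setU11.
Qed.

Lemma card_basis (B : {set E}) : indep M B -> rank_matroid M <= #|B| -> is_basis M B.
Proof.
move=> iB le; split => // Y iY sBY; apply/esym/eqP; rewrite eqEcard sBY /=.
by apply: leq_trans le; apply: rk_ub; rewrite ?subsetT.
Qed.

End Aux.

Lemma ndisj {E : finType} {A B : {set E}} : ~~ [disjoint A & B] -> exists y, y \in A /\ y \in B.
Proof. by rewrite -setI_eq0 => /set0Pn [y]; rewrite inE => /andP[]; exists y. Qed.


Lemma arith r a b y x : 3 < r -> a <= 3 -> b <= y -> b.+2 <= r -> 1 <= x -> 2 <= x -> y != 0 ->
  (1 <= x /\ 1 <= y /\ a + b < r + 1) \/ (2 <= x /\ 2 <= y /\ a + b < r + 2).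
Proof. move=> *; lia. Qed.

Theorem lemma3p4 (E : finType) (M : matroid E) (Cs Ds : {set E}) :
  three_connected M -> 4 <= rank_matroid M ->
  cocircuit M Cs -> cocircuit M Ds -> Cs != Ds ->
  4 <= rk M (Cs :|: Ds).
Proof.
move=> h3 hr [hC minC] [hD minD] neq.
rewrite leqNgt; apply/negP => hX.
have CnD : ~~ (Cs \subset Ds).
  by apply/negP => sub; apply: (minD Cs) hC; rewrite properEneq neq sub.
have DnC : ~~ (Ds \subset Cs).
  by apply/negP => sub; apply: (minC Ds) hD; rewrite properEneq eq_sym neq sub.
have key : forall I : {set E}, I \subset ~:(Cs :|: Ds) -> indep M I -> #|I|.+2 <= rank_matroid M.
  move=> I sI iI; rewrite leqNgt; apply/negP => big.
  have Ir : #|I| <= rank_matroid M by apply: rk_ub; rewrite ?subsetT.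
  have dIC : forall y, y \in I -> y \in Cs -> False.
    by move=> y yI yC; move: (subsetP sI y yI); rewrite !inE yC.
  have dID : forall y, y \in I -> y \in Ds -> False.
    by move=> y yI yD; move: (subsetP sI y yI); rewrite !inE yD orbT.
  have [eI|ltI] := eqVneq #|I| (rank_matroid M).
    have bI : is_basis M I by apply: card_basis; rewrite ?eI.
    by have [y [yI yC]] := ndisj (hC I bI); apply: (dIC y).
  have ltI' : #|I| < rank_matroid M by rewrite ltn_neqAle ltI Ir.
  have nm : ~ meets_all_bases M (Cs :&: Ds).
    apply: minC; rewrite properEneq subsetIl andbT.
    by apply: contra CnD => /eqP e; rewrite -e subsetIr.
  have [B' hB'] := not_all_ex_not _ _ nm.
  have [bB' dis0] := imply_to_and _ _ hB'.
  have dis : [disjoint B' & Cs :&: Ds] by apply/negPn/negP.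
  have cB' := basis_card bB'.
  have ltB : #|I| < #|B'| by rewrite cB'.
  have [x /setDP[xB' xI] ix] := indep_aug iI bB'.1 ltB.
  have bx : is_basis M (x |: I).
    by apply: card_basis => //; rewrite cardsU1 xI; lia.
  have [y [yx yC]] := ndisj (hC _ bx).
  have [z [zx zD]] := ndisj (hD _ bx).
  move: yx zx; rewrite !inE => /orP[/eqP ey|yI]; last by case: (dIC y).
  move=> /orP[/eqP ez|zI]; last by case: (dID z).
  subst y z.
  by move: (disjointFr dis xB'); rewrite inE yC zD.
have rkY : (rk M (~:(Cs :|: Ds))).+2 <= rank_matroid M.
  have [I /andP[sI iI] ->] := rk_attain M (~:(Cs :|: Ds)).
  exact: key.
have [c /setDP[cC cD]] : exists c, c \in Cs :\: Ds.
  by apply/set0Pn; rewrite setD_eq0.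
have [d /setDP[dD dC]] : exists d, d \in Ds :\: Cs.
  by apply/set0Pn; rewrite setD_eq0.
have cX : c \in Cs :|: Ds by rewrite inE cC.
have dX : d \in Cs :|: Ds by rewrite inE dD orbT.
have X1 : 1 <= #|Cs :|: Ds| by apply/card_gt0P; exists c.
have X2 : 2 <= #|Cs :|: Ds|.
  apply/card_gt1P; exists c, d; split => //.
  by apply/negP => /eqP e; move: dC; rewrite -e cC.
have hrkX : rk M (Cs :|: Ds) <= 3 by [].
have rc := rk_card M (~:(Cs :|: Ds)).
have [e0|ne0] := eqVneq #|~:(Cs :|: Ds)| 0.
  have eT : Cs :|: Ds = setT by rewrite -[Cs :|: Ds]setCK (cards0_eq e0) setC0.
  by move: hr hX; rewrite eT /rank_matroid => a b; move: (leq_ltn_trans a b); rewrite ltnn.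
have [[h1 [h2 h3']]|[h1 [h2 h3']]] :=
  arith hr hrkX rc rkY X1 X2 ne0.
- by apply: (h3 1 isT isT (Cs :|: Ds)).
- by apply: (h3 2 isT isT (Cs :|: Ds)).
Qed.
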